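(* Let $n\ge 2$. Then there exists a non-convex domain $D\subset\mathbb{C}^n$ such that $A(D)$ is pseudoconvex for every real isometry $A$ of $\mathbb{C}^n=\mathbb{R}^{2n}$. *)

(* Defs.v *)
From mathcomp Require Import ssreflect ssrfun ssrbool eqtype ssrnat seq choice fintype.
From Stdlib Require Import Reals.
From Coquelicot Require Import Coquelicot.

Set Implicit Arguments.
Unset Strict Implicit.

Local Open Scope R_scope.

Definition Cn (n : nat) : Type := 'I_n -> C.

Definition cn_dist (n : nat) (z w : Cn n) : R :=
  sqrt (foldr Rplus 0 (map (fun j => (Cmod (Cminus (z j) (w j))) ^ 2) (enum 'I_n))).

Definition cn_add (n : nat) (z w : Cn n) : Cn n := fun j => Cplus (z j) (w j).
Definition cn_cscale (n : nat) (l : C) (z : Cn n) : Cn n := fun j => Cmult l (z j).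
Definition cn_rscale (n : nat) (t : R) (z : Cn n) : Cn n := fun j => Cmult (RtoC t) (z j).
Definition cn_zero (n : nat) : Cn n := fun _ => RtoC 0.

Definition cn_open (n : nat) (D : Cn n -> Prop) : Prop :=
  forall z, D z -> exists eps, 0 < eps /\ forall w, cn_dist z w < eps -> D w.

Definition cn_closed (n : nat) (K : Cn n -> Prop) : Prop :=
  cn_open (fun z => ~ K z).

Definition cn_bounded (n : nat) (K : Cn n -> Prop) : Prop :=
  exists r, forall z, K z -> cn_dist (@cn_zero n) z <= r.

Definition cn_connected (n : nat) (D : Cn n -> Prop) : Prop :=
  forall U V : Cn n -> Prop, cn_open U -> cn_open V ->
    (forall z, D z -> U z \/ V z) ->
    (forall z, D z -> U z -> V z -> False) ->
    (exists z, D z /\ U z) -> (exists z, D z /\ V z) -> False.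

Definition cn_domain (n : nat) (D : Cn n -> Prop) : Prop :=
  (exists z, D z) /\ cn_open D /\ cn_connected D.

Definition cn_convex (n : nat) (D : Cn n -> Prop) : Prop :=
  forall z w t, D z -> D w -> 0 <= t <= 1 ->
    D (cn_add (cn_rscale (1 - t) z) (cn_rscale t w)).

Definition real_isometry (n : nat) (A : Cn n -> Cn n) : Prop :=
  forall z w, cn_dist (A z) (A w) = cn_dist z w.

Definition cn_image (n : nat) (A : Cn n -> Cn n) (D : Cn n -> Prop) : Cn n -> Prop :=
  fun w => exists z, D z /\ w = A z.

Definition cn_continuous_on (n : nat) (D : Cn n -> Prop) (u : Cn n -> R) : Prop :=
  forall z, D z -> forall eps, 0 < eps -> exists delta, 0 < delta /\
    forall w, D w -> cn_dist z w < delta -> Rabs (u w - u z) < eps.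

Definition circle_pt (n : nat) (a b : Cn n) (theta : R) : Cn n :=
  cn_add a (cn_cscale (cos theta, sin theta) b).

Definition cont_psh_on (n : nat) (D : Cn n -> Prop) (u : Cn n -> R) : Prop :=
  cn_continuous_on D u /\
  forall a b : Cn n,
    (forall l : C, Cmod l <= 1 -> D (cn_add a (cn_cscale l b))) ->
    u a <= / (2 * PI) * RInt (fun theta => u (circle_pt a b theta)) 0 (2 * PI).

(* exhaustion function: every sublevel set is relatively compact in D *)
Definition exhaustion_on (n : nat) (D : Cn n -> Prop) (u : Cn n -> R) : Prop :=
  forall c : R, exists K : Cn n -> Prop,
    cn_closed K /\ cn_bounded K /\ (forall z, K z -> D z) /\
    (forall z, D z -> u z < c -> K z).

Definition pseudoconvex (n : nat) (D : Cn n -> Prop) : Prop :=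
  exists u : Cn n -> R, cont_psh_on D u /\ exhaustion_on D u.

(* Main.v *)
Set Warnings "-notation-overridden -ambiguous-paths".
Require Import Defs.
From mathcomp Require Import ssreflect ssrfun ssrbool eqtype ssrnat seq choice fintype.
From Stdlib Require Import Reals Lra Psatz ClassicalEpsilon FunctionalExtensionality Classical.
From Coquelicot Require Import Coquelicot.
Local Open Scope R_scope.
Section Sums.
Variable T : Type.
Definition Sl (l : seq T) (f : T -> R) : R := foldr Rplus 0 (map f l).

Lemma Sl_cons a l f : Sl (a :: l) f = f a + Sl l f.
Proof. by []. Qed.
Lemma Sl_ext l f g : (forall j, f j = g j) -> Sl l f = Sl l g.
Proof. move=> H; elim: l => [|a l IH] //; rewrite /Sl /= in IH *; by rewrite H IH. Qed.
Lemma Sl_add l f g : Sl l (fun j => f j + g j) = Sl l f + Sl l g.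
Proof. elim: l => [|a l IH] /=; [rewrite /Sl /=; ring| rewrite /Sl /= in IH *; rewrite IH; ring]. Qed.
Lemma Sl_scal l k f : Sl l (fun j => k * f j) = k * Sl l f.
Proof. elim: l => [|a l IH] /=; [rewrite /Sl /=; ring| rewrite /Sl /= in IH *; rewrite IH; ring]. Qed.
Lemma Sl_opp l f : Sl l (fun j => - f j) = - Sl l f.
Proof. elim: l => [|a l IH] /=; [rewrite /Sl /=; ring| rewrite /Sl /= in IH *; rewrite IH; ring]. Qed.
Lemma Sl_zero l : Sl l (fun _ => 0) = 0.
Proof. elim: l => [|a l IH] /=; [rewrite /Sl /=; ring| rewrite /Sl /= in IH *; rewrite IH; ring]. Qed.
Lemma Sl_nonneg l f : (forall j, 0 <= f j) -> 0 <= Sl l f.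
Proof. move=> H; elim: l => [|a l IH]; first by rewrite /Sl /=; lra. rewrite /Sl /= in IH *; have := H a; lra. Qed.
Lemma Sl_le l f g : (forall j, f j <= g j) -> Sl l f <= Sl l g.
Proof. move=> H; elim: l => [|a l IH]; first by rewrite /Sl /=; lra. rewrite /Sl /= in IH *; have := H a; lra. Qed.

Lemma step_ineq {X Y x y B E b e} :
  0 <= B -> 0 <= E -> 0 <= b -> 0 <= e ->
  X^2 + Y^2 <= B * E -> x^2 + y^2 <= b * e ->
  (X + x)^2 + (Y + y)^2 <= (B + b) * (E + e).
Proof.
move=> hB hE hb he h1 h2.
have h3 : (X*x + Y*y)^2 <= (B*e) * (b*E).
  have : (X*x+Y*y)^2 <= (X^2+Y^2)*(x^2+y^2).
    have e0 : (X^2+Y^2)*(x^2+y^2) - (X*x+Y*y)^2 = (X*y-Y*x)^2 by ring.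
    have := pow2_ge_0 (X*y-Y*x); lra.
  have : (X^2+Y^2)*(x^2+y^2) <= (B*E)*(b*e).
    apply Rmult_le_compat; nra.
  nra.
have h4 : 2*(X*x+Y*y) <= B*e + b*E.
  have hp : 0 <= B*e + b*E by nra.
  apply Rsqr_incr_0_var => //. rewrite /Rsqr.
  have := pow2_ge_0 (B*e - b*E). have e1 : (X*x+Y*y)^2 = (X*x+Y*y)*(X*x+Y*y) by ring. nra.
nra.
Qed.

Lemma Sl_lagrange l (x y B E : T -> R) :
  (forall j, 0 <= B j) -> (forall j, 0 <= E j) ->
  (forall j, x j ^ 2 + y j ^ 2 <= B j * E j) ->
  Sl l x ^ 2 + Sl l y ^ 2 <= Sl l B * Sl l E.
Proof.
move=> hB hE h; elim: l => [|a l IH]; first by rewrite /Sl /=; lra.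
rewrite !Sl_cons.
have H := step_ineq (Sl_nonneg l B hB) (Sl_nonneg l E hE) (hB a) (hE a) IH (h a).
have e0 : forall u v : R, (u + v)^2 = (v+u)^2 by move=> u v; ring.
rewrite (e0 (x a)) (e0 (y a)). rewrite (Rplus_comm (B a)) (Rplus_comm (E a)). exact: H.
Qed.

End Sums.
Arguments Sl {T}. Arguments Sl_cons {T}. Arguments Sl_ext {T}. Arguments Sl_add {T}. Arguments Sl_scal {T}. Arguments Sl_opp {T}. Arguments Sl_zero {T}. Arguments Sl_nonneg {T}. Arguments Sl_le {T}. Arguments Sl_lagrange {T}.

Section Delta.
Variable T : eqType.
Lemma Sl_term_le (l : seq T) (f : T -> R) j : (forall k, 0 <= f k) -> j \in l -> f j <= Sl l f.
Proof.
move=> H; elim: l => [|a l IH] //=; rewrite inE; case/orP.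
- move/eqP=> ->. rewrite /Sl /=. have := Sl_nonneg l f H. rewrite /Sl. lra.
- move=> hj. have := IH hj. rewrite /Sl /=. have := H a. lra.
Qed.

Lemma Sl_eq0 (l : seq T) (f : T -> R) j : (forall k, 0 <= f k) -> j \in l -> Sl l f = 0 -> f j = 0.
Proof. move=> H hj h0. have := Sl_term_le l f j H hj. have := H j. lra. Qed.
Lemma Sl_delta (l : seq T) i v : uniq l -> Sl l (fun j => if j == i then v else 0) = if i \in l then v else 0.
Proof.
elim: l => [|a l IH] /=; first by rewrite /Sl.
move/andP=> [ha hu]; rewrite Sl_cons IH // inE.
case: (eqVneq a i) => [eai|hne] /=.
- subst a. rewrite (negbTE ha) /=. lra.
- rewrite /=. lra.
Qed.
End Delta.
Section Geo.
Variable n : nat.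
Implicit Types z w x y P Q : Cn n.
Definition Sm (f : 'I_n -> R) := Sl (enum 'I_n) f.
Definition term (z w : Cn n) j := (fst (z j) - fst (w j))^2 + (snd (z j) - snd (w j))^2.
Definition D2 (z w : Cn n) := Sm (term z w).
Definition Ip (z P w Q : Cn n) := Sm (fun j => (fst (z j) - fst (P j)) * (fst (w j) - fst (Q j)) + (snd (z j) - snd (P j)) * (snd (w j) - snd (Q j))).

Lemma term_nonneg z w j : 0 <= term z w j.
Proof. rewrite /term; have := pow2_ge_0 (fst (z j) - fst (w j)); have := pow2_ge_0 (snd (z j) - snd (w j)); lra. Qed.
Lemma D2_nonneg z w : 0 <= D2 z w.
Proof. apply: Sl_nonneg => j; exact: term_nonneg. Qed.
Lemma dist_D2 z w : cn_dist z w = sqrt (D2 z w).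
Proof.
rewrite /cn_dist /D2 /Sm /Sl; congr sqrt; congr foldr; apply: eq_map => j.
rewrite /Cmod pow2_sqrt /term /Cminus /Cplus /Copp /=; first ring.
rewrite !Rmult_1_r; apply Rplus_le_le_0_compat; apply Rle_0_sqr.
Qed.
Lemma D2_dist z w : D2 z w = cn_dist z w ^ 2.
Proof. rewrite dist_D2 pow2_sqrt //; exact: D2_nonneg. Qed.
Lemma dist_nonneg z w : 0 <= cn_dist z w.
Proof. rewrite dist_D2; exact: sqrt_pos. Qed.
Lemma D2_sym z w : D2 z w = D2 w z.
Proof. apply: Sl_ext => j; rewrite /term; ring. Qed.
Lemma dist_sym z w : cn_dist z w = cn_dist w z.
Proof. by rewrite !dist_D2 D2_sym. Qed.
Lemma D2_refl z : D2 z z = 0.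
Proof. rewrite /D2 /Sm -(Sl_zero (enum 'I_n)); apply: Sl_ext => j; rewrite /term; ring. Qed.
Lemma dist_refl z : cn_dist z z = 0.
Proof. by rewrite dist_D2 D2_refl sqrt_0. Qed.

Lemma polar z w P : 2 * Ip z P w P = D2 z P + D2 w P - D2 z w.
Proof.
rewrite /Ip /D2 /Sm /Rminus -Sl_scal -Sl_opp -!Sl_add; apply: Sl_ext => j; rewrite /term; ring.
Qed.

Lemma CS z P w Q : (Ip z P w Q)^2 <= D2 z P * D2 w Q.
Proof.
have := Sl_lagrange (enum 'I_n) (fun j => (fst (z j) - fst (P j)) * (fst (w j) - fst (Q j)) + (snd (z j) - snd (P j)) * (snd (w j) - snd (Q j))) (fun _ => 0) (term z P) (term w Q) (term_nonneg z P) (term_nonneg w Q).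
rewrite Sl_zero /Ip /D2 /Sm => H. have : Sl (enum 'I_n) (fun j => (fst (z j) - fst (P j)) * (fst (w j) - fst (Q j)) + (snd (z j) - snd (P j)) * (snd (w j) - snd (Q j))) ^ 2 + 0 ^ 2 <=
   Sl (enum 'I_n) (term z P) * Sl (enum 'I_n) (term w Q).
  apply: H => j. rewrite /term.
  set a1 := (fst (z j) - fst (P j)). set a2 := (snd (z j) - snd (P j)).
  set b1 := (fst (w j) - fst (Q j)). set b2 := (snd (w j) - snd (Q j)).
  have e0 : (a1^2+a2^2)*(b1^2+b2^2) - ((a1*b1+a2*b2)^2 + 0^2) = (a1*b2-a2*b1)^2 by ring.
  have := pow2_ge_0 (a1*b2-a2*b1). lra.
have e1 : (0:R)^2 = 0 by ring. rewrite e1 Rplus_0_r. move=> h; exact h.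
Qed.

Lemma triangle x y z : cn_dist x z <= cn_dist x y + cn_dist y z.
Proof.
have hd : D2 x z = D2 x y + D2 y z + 2 * Ip x y y z.
  rewrite /Ip /D2 /Sm -Sl_scal -!Sl_add; apply: Sl_ext => j; rewrite /term; ring.
have hcs := CS x y y z.
rewrite !D2_dist in hd hcs.
have h1 := dist_nonneg x y. have h2 := dist_nonneg y z. have h3 := dist_nonneg x z.
have h4 : Ip x y y z <= cn_dist x y * cn_dist y z.
  apply Rsqr_incr_0_var; last by nra. rewrite /Rsqr. nra.
apply Rsqr_incr_0_var; last by nra. rewrite /Rsqr. nra.
Qed.

Lemma iso_D2 (A : Cn n -> Cn n) : real_isometry A -> forall z w, D2 (A z) (A w) = D2 z w.
Proof. move=> hA z w; by rewrite !D2_dist hA. Qed.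

Lemma iso_Ip (A : Cn n -> Cn n) : real_isometry A -> forall z w P, Ip (A z) (A P) (A w) (A P) = Ip z P w P.
Proof.
move=> hA z w P. have h1 := polar (A z) (A w) (A P). have h2 := polar z w P.
rewrite !(iso_D2 A hA) in h1. lra.
Qed.

Definition H (P Q y : Cn n) := 3 * D2 y P - 4 * (Ip y P Q P)^2.

Lemma iso_H (A : Cn n -> Cn n) : real_isometry A -> forall P Q y, H (A P) (A Q) (A y) = H P Q y.
Proof. move=> hA P Q y. by rewrite /H (iso_D2 A hA) (iso_Ip A hA). Qed.

Definition uf (P Q y : Cn n) := / (1 - H P Q y) + D2 y P.

End Geo.
Arguments Sm {n}. Arguments term {n}. Arguments D2 {n}. Arguments Ip {n}. Arguments H {n}. Arguments uf {n}.
Arguments D2_nonneg {n}. Arguments term_nonneg {n}. Arguments dist_D2 {n}. Arguments D2_dist {n}. Arguments dist_nonneg {n}. Arguments D2_sym {n}. Arguments dist_sym {n}. Arguments D2_refl {n}. Arguments dist_refl {n}. Arguments polar {n}. Arguments CS {n}. Arguments triangle {n}. Arguments iso_D2 {n}. Arguments iso_Ip {n}. Arguments iso_H {n}.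
Definition trig k0 k1 k2 k3 k4 k5 (t : R) :=
  k0 + k1 * cos t + k2 * sin t + k3 * (cos t)^2 + k4 * (sin t * cos t) + k5 * (sin t)^2.

Lemma trig_RInt k0 k1 k2 k3 k4 k5 :
  is_RInt (trig k0 k1 k2 k3 k4 k5) 0 (2*PI) (2*PI*k0 + PI*k3 + PI*k5).
Proof.
set F := fun t => k0 * t + k1 * sin t - k2 * cos t + k3 * (t/2 + sin t * cos t / 2)
   + k4 * ((sin t)^2 / 2) + k5 * (t/2 - sin t * cos t / 2).
have hF : forall t : R, is_derive F t (trig k0 k1 k2 k3 k4 k5 t).
  move=> t. rewrite /F /trig. auto_derive => //.
  change RinvImpl.Rinv with Rinv.
  have h := sin2_cos2 t. rewrite /Rsqr in h.
  apply Rminus_diag_uniq.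
  match goal with |- ?X = 0 => transitivity ((k3+k5)*(1 - (sin t * sin t + cos t * cos t))/2) end.
  - field.
  - rewrite h. field.
have hc : forall t : R, continuous (trig k0 k1 k2 k3 k4 k5) t.
  move=> t; apply: ex_derive_continuous; rewrite /trig; auto_derive => //.
have := @is_RInt_derive R_CompleteNormedModule F (trig k0 k1 k2 k3 k4 k5) 0 (2*PI)
  (fun t _ => hF t) (fun t _ => hc t).
have e : minus (F (2*PI)) (F 0) = 2*PI*k0 + PI*k3 + PI*k5.
  rewrite /minus /plus /opp /= /F sin_2PI cos_2PI sin_0 cos_0. field.
by rewrite e.
Qed.
Section Circ.
Variable n : nat.
Implicit Types a b P Q : Cn n.
Definition Bn b := Sm (fun j => fst (b j)^2 + snd (b j)^2).
Definition Xc a b P := Sm (fun j => (fst (a j) - fst (P j)) * fst (b j) + (snd (a j) - snd (P j)) * snd (b j)).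
Definition Yc a b P := Sm (fun j => (snd (a j) - snd (P j)) * fst (b j) - (fst (a j) - fst (P j)) * snd (b j)).
Definition Be b P Q := Sm (fun j => fst (b j) * (fst (Q j) - fst (P j)) + snd (b j) * (snd (Q j) - snd (P j))).
Definition Ga b P Q := Sm (fun j => fst (b j) * (snd (Q j) - snd (P j)) - snd (b j) * (fst (Q j) - fst (P j))).

Lemma circ_fst a b t j : fst (circle_pt a b t j) = fst (a j) + (cos t * fst (b j) - sin t * snd (b j)).
Proof. by []. Qed.
Lemma circ_snd a b t j : snd (circle_pt a b t j) = snd (a j) + (cos t * snd (b j) + sin t * fst (b j)).
Proof. by []. Qed.

Lemma circ_D2 a b P t : D2 (circle_pt a b t) P = D2 a P + Bn b + 2 * cos t * Xc a b P + 2 * sin t * Yc a b P.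
Proof.
rewrite /D2 /Bn /Xc /Yc /Sm -!Sl_scal -!Sl_add; apply Sl_ext => j.
rewrite /term circ_fst circ_snd.
have h := sin2_cos2 t. rewrite /Rsqr in h.
apply Rminus_diag_uniq.
match goal with |- ?X = 0 => transitivity ((fst (b j)^2 + snd (b j)^2) * ((sin t * sin t + cos t * cos t) - 1)) end.
- ring.
- rewrite h. ring.
Qed.

Lemma circ_Ip a b P Q t : Ip (circle_pt a b t) P Q P = Ip a P Q P + cos t * Be b P Q + sin t * Ga b P Q.
Proof.
rewrite /Ip /Be /Ga /Sm -!Sl_scal -!Sl_add; apply Sl_ext => j.
rewrite circ_fst circ_snd. ring.
Qed.

Lemma bg_bound b P Q : Be b P Q ^ 2 + Ga b P Q ^ 2 <= Bn b * D2 Q P.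
Proof.
apply: Sl_lagrange => j.
- have := pow2_ge_0 (fst (b j)); have := pow2_ge_0 (snd (b j)); lra.
- exact: term_nonneg.
- rewrite /term. apply Req_le. ring.
Qed.

Lemma Bn_nonneg b : 0 <= Bn b.
Proof. apply: Sl_nonneg => j; have := pow2_ge_0 (fst (b j)); have := pow2_ge_0 (snd (b j)); lra. Qed.

Lemma tangent T m : T < 1 -> m < 1 -> / (1 - m) + / (1 - m)^2 * (T - m) <= / (1 - T).
Proof.
move=> hT hm.
have ha : 0 < 1 - T by lra. have hb : 0 < 1 - m by lra.
set a := 1 - T in ha *. set b := 1 - m in hb *.
have -> : T - m = b - a by rewrite /a /b; ring.
have e : / b + / b ^ 2 * (b - a) = (2 * b - a) / b ^ 2 by field; lra.
rewrite e. apply (Rmult_le_reg_r (b ^ 2 * a)). apply Rmult_lt_0_compat; [apply pow_lt|]; lra.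
have e2 : (2 * b - a) / b ^ 2 * (b ^ 2 * a) = (2*b - a) * a by field; lra.
have e3 : / a * (b ^ 2 * a) = b ^ 2 by field; lra.
rewrite e2 e3. have := pow2_ge_0 (b - a). nra.
Qed.

Lemma psh_ineq P Q a b :
  D2 Q P = 1 -> (forall t, H P Q (circle_pt a b t) < 1) -> H P Q a < 1 ->
  uf P Q a <= / (2 * PI) * RInt (fun t => uf P Q (circle_pt a b t)) 0 (2 * PI).
Proof.
move=> hQ hc ha.
set W := D2 a P. set B := Bn b. set X := Xc a b P. set Y := Yc a b P.
set E0 := Ip a P Q P. set be := Be b P Q. set ga := Ga b P Q.
set m := H P Q a.
have hm : m = 3 * W - 4 * E0 ^ 2 by [].
set Tf := fun t => 3 * (W + B + 2 * cos t * X + 2 * sin t * Y) - 4 * (E0 + cos t * be + sin t * ga)^2.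
have hT : forall t, H P Q (circle_pt a b t) = Tf t.
  by move=> t; rewrite /H circ_D2 circ_Ip.
have hu : forall t, uf P Q (circle_pt a b t) = / (1 - Tf t) + (W + B + 2 * cos t * X + 2 * sin t * Y).
  by move=> t; rewrite /uf -hT circ_D2.
set r := / (1 - m). set q := / (1 - m)^2.
set L := trig (r + q * (3*W + 3*B - 4*E0^2 - m) + W + B) (q * (6*X - 8*E0*be) + 2*X)
   (q * (6*Y - 8*E0*ga) + 2*Y) (-4*q*be^2) (-8*q*be*ga) (-4*q*ga^2).
have hL : forall t, L t = r + q * (Tf t - m) + (W + B + 2 * cos t * X + 2 * sin t * Y).
  move=> t. rewrite /L /trig /Tf.
  have h := sin2_cos2 t. rewrite /Rsqr in h. ring.
have hLe : forall t, L t <= uf P Q (circle_pt a b t).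
  move=> t. rewrite hL hu. have h1 : Tf t < 1 by rewrite -hT. have := tangent (Tf t) m h1 ha. rewrite -/r -/q. lra.
have hcont : forall t, continuous (fun t => / (1 - Tf t) + (W + B + 2 * cos t * X + 2 * sin t * Y)) t.
  move=> t. apply: ex_derive_continuous. rewrite /Tf. auto_derive.
  have := hc t. rewrite hT /Tf. lra.
have hexu : ex_RInt (fun t => uf P Q (circle_pt a b t)) 0 (2 * PI).
  apply: (ex_RInt_ext (fun t => / (1 - Tf t) + (W + B + 2 * cos t * X + 2 * sin t * Y))).
  - move=> t _. by rewrite hu.
  - apply: ex_RInt_continuous => t _. exact: hcont.
have hIL := trig_RInt (r + q * (3*W + 3*B - 4*E0^2 - m) + W + B) (q * (6*X - 8*E0*be) + 2*X)
   (q * (6*Y - 8*E0*ga) + 2*Y) (-4*q*be^2) (-8*q*be*ga) (-4*q*ga^2).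
have hle : RInt L 0 (2 * PI) <= RInt (fun t => uf P Q (circle_pt a b t)) 0 (2 * PI).
  apply: RInt_le.
  - have := PI_RGT_0; lra.
  - exact: (ex_intro _ _ hIL).
  - exact: hexu.
  - move=> t _; exact: hLe.
rewrite (is_RInt_unique _ _ _ _ hIL) in hle.
have hpi := PI_RGT_0.
have hm1 : m < 1 := ha.
have hq : 0 < q by rewrite /q; apply: Rinv_0_lt_compat; apply: pow_lt; lra.
have hbg := bg_bound b P Q. rewrite hQ -/be -/ga -/B in hbg.
have hB := Bn_nonneg b. rewrite -/B in hB.
have key : uf P Q a <= r + q * (3 * B - 2 * (be^2 + ga^2)) + W + B.
  rewrite /uf -/m -/r -/W. have : 0 <= q * (3 * B - 2 * (be^2 + ga^2)) by apply: Rmult_le_pos; lra. lra.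
apply: (Rle_trans _ _ _ key).
apply (Rmult_le_reg_l (2 * PI)); first lra.
rewrite -Rmult_assoc Rinv_r; last lra.
rewrite Rmult_1_l. apply: (Rle_trans _ _ _ _ hle).
rewrite hm. apply Req_le. ring.
Qed.
End Circ.
Section Cont.
Variable n : nat.
Implicit Types x y z w P Q : Cn n.
Definition ctn (f : Cn n -> R) y := forall eps, 0 < eps -> exists delta, 0 < delta /\
  forall w, cn_dist y w < delta -> Rabs (f w - f y) < eps.

Lemma ctn_comp (phi : R -> R) f y : continuous phi (f y) -> ctn f y -> ctn (fun w => phi (f w)) y.
Proof.
move=> hphi hf eps heps.
have hc : continuity_pt phi (f y) by apply/continuity_pt_filterlim.
have [alp [halp H1]] := hc eps heps.
have [d [hd H2]] := hf alp halp.
exists d; split => // w hw.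
case: (Req_dec (f w) (f y)) => [->|hne]; first by rewrite Rminus_eq_0 Rabs_R0.
have := H1 (f w). rewrite /D_x /no_cond /= /R_dist. apply. split; [split=> //; auto|exact: H2].
Qed.

Lemma ctn_add f g y : ctn f y -> ctn g y -> ctn (fun w => f w + g w) y.
Proof.
move=> hf hg eps heps.
have [d1 [hd1 H1]] := hf (eps/2) ltac:(lra).
have [d2 [hd2 H2]] := hg (eps/2) ltac:(lra).
exists (Rmin d1 d2); split; first by apply: Rmin_pos.
move=> w hw. have h1 := H1 w (Rlt_le_trans _ _ _ hw (Rmin_l _ _)).
have h2 := H2 w (Rlt_le_trans _ _ _ hw (Rmin_r _ _)).
have := Rabs_triang (f w - f y) (g w - g y).
have -> : f w - f y + (g w - g y) = f w + g w - (f y + g y) by ring. lra.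
Qed.

Lemma ctn_dist P y : ctn (fun w => cn_dist w P) y.
Proof.
move=> eps heps; exists eps; split => // w hw.
have h1 := triangle w y P. have h2 := triangle y w P.
rewrite (dist_sym w y) in h1.
apply: Rabs_def1; lra.
Qed.

Lemma H_expr P Q y : H P Q y = 3 * (cn_dist y P)^2 - 4 * (((cn_dist y P)^2 + D2 Q P - (cn_dist y Q)^2) / 2)^2.
Proof.
rewrite /H -!D2_dist. have := polar y Q P. move=> h.
have -> : Ip y P Q P = (D2 y P + D2 Q P - D2 y Q) / 2 by lra. done.
Qed.

Lemma ctn_H P Q y : ctn (H P Q) y.
Proof.
have e : H P Q = fun w => (fun s => 3 * s^2) (cn_dist w P) +
   (fun s => - 4 * s ^ 2) ((fun s => (s^2 + D2 Q P)/2) (cn_dist w P) + (fun s => - s^2/2) (cn_dist w Q)).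
  apply: functional_extensionality => w. rewrite H_expr. field.
rewrite e. apply: (ctn_add (fun w => 3 * (cn_dist w P)^2)).
- apply: (ctn_comp (fun s => 3 * s^2) (fun w => cn_dist w P)); last exact: ctn_dist. apply: ex_derive_continuous; auto_derive => //.
- apply: (ctn_comp (fun s => - 4 * s ^ 2) (fun w => (cn_dist w P ^ 2 + D2 Q P) / 2 + - cn_dist w Q ^ 2 / 2)); first by apply: ex_derive_continuous; auto_derive => //.
  apply: (ctn_add (fun w => (cn_dist w P ^ 2 + D2 Q P) / 2)).
  + apply: (ctn_comp (fun s => (s^2 + D2 Q P)/2) (fun w => cn_dist w P)); last exact: ctn_dist. apply: ex_derive_continuous; auto_derive => //.
  + apply: (ctn_comp (fun s => - s^2/2) (fun w => cn_dist w Q)); last exact: ctn_dist. apply: ex_derive_continuous; auto_derive => //.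
Qed.

Lemma ctn_uf P Q y : H P Q y < 1 -> ctn (uf P Q) y.
Proof.
move=> hy.
have e : uf P Q = fun w => (fun s => / (1 - s)) (H P Q w) + (fun s => s ^ 2) (cn_dist w P).
  apply: functional_extensionality => w. by rewrite /uf D2_dist.
rewrite e. apply: (ctn_add (fun w => / (1 - H P Q w))).
- apply: (ctn_comp (fun s => / (1 - s)) (H P Q)); last exact: ctn_H. apply: ex_derive_continuous; auto_derive. lra.
- apply: (ctn_comp (fun s => s ^ 2) (fun w => cn_dist w P)); last exact: ctn_dist. apply: ex_derive_continuous; auto_derive => //.
Qed.
End Cont.
Arguments ctn {n}. Arguments ctn_comp {n}. Arguments ctn_add {n}. Arguments ctn_dist {n}. Arguments H_expr {n}. Arguments ctn_H {n}. Arguments ctn_uf {n}.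
Lemma interval_conn (Pp Qq : R -> Prop) :
  (forall t, 0 <= t <= 1 -> Pp t \/ Qq t) ->
  (forall t, 0 <= t <= 1 -> Pp t -> Qq t -> False) ->
  (forall t, 0 <= t <= 1 -> Pp t -> exists d, 0 < d /\ forall s, 0 <= s <= 1 -> Rabs (s - t) < d -> Pp s) ->
  (forall t, 0 <= t <= 1 -> Qq t -> exists d, 0 < d /\ forall s, 0 <= s <= 1 -> Rabs (s - t) < d -> Qq s) ->
  Pp 0 -> Qq 1 -> False.
Proof.
move=> hcov hdis hP hQ hP0 hQ1.
set E := fun t => 0 <= t <= 1 /\ forall s, 0 <= s <= t -> Pp s.
have hb : bound E by exists 1 => t [ht _]; lra.
have hE0 : E 0.
  split; first lra. move=> s hs. have -> : s = 0 by lra. done.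
have [m [hub hlub]] := completeness E hb (ex_intro _ 0 hE0).
have hm0 : 0 <= m by apply: hub.
have hm1 : m <= 1 by apply: hlub => t [ht _]; lra.
have claim : forall s, 0 <= s < m -> Pp s.
  move=> s hs. apply: NNPP => hn.
  have : m <= s.
    apply: hlub => t [ht hPt]. apply: Rnot_lt_le => hst. apply: hn. apply: hPt. lra.
  lra.
have hmI : 0 <= m <= 1 by lra.
case: (hcov m hmI) => hcase.
- have [d [hd hPd]] := hP m hmI hcase.
  case: (Req_dec m 1) => hm1'.
  + apply: (hdis 1); [lra| rewrite -hm1' //| done].
  + set t' := Rmin (m + d/2) 1.
    have ht'1 : t' <= 1 by apply: Rmin_r.
    have ht'm : m < t'.
      rewrite /t'. apply: Rmin_glb_lt; lra.
    have ht'd : t' <= m + d/2 by apply: Rmin_l.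
    have : E t'.
      split; first lra.
      move=> s hs. case: (Rlt_le_dec s m) => hsm.
      * apply: claim; lra.
      * apply: hPd; first lra. rewrite Rabs_right; lra.
    move/hub. lra.
- have hm0' : 0 < m.
    case: (Req_dec m 0) => h0; last lra.
    exfalso. apply: (hdis 0); [lra|done|rewrite -h0 //].
  have [d [hd hQd]] := hQ m hmI hcase.
  set s := Rmax (m - d/2) 0.
  have hs0 : 0 <= s by apply: Rmax_r.
  have hsm : s < m by rewrite /s; apply: Rmax_lub_lt; lra.
  have hsd : m - d/2 <= s by apply: Rmax_l.
  apply: (hdis s); first lra.
  + apply: claim; lra.
  + apply: hQd; first lra. rewrite Rabs_left; lra.
Qed.
Section Dom.
Variable n : nat.
Variables i0 i1 : 'I_n.
Hypothesis hi : i0 != i1.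
Implicit Types x y z w : Cn n.

Definition e0 : Cn n := fun j => if j == i0 then RtoC 1 else RtoC 0.
Definition Oz : Cn n := @cn_zero n.
Definition Dm : Cn n -> Prop := fun x => H Oz e0 x < 1.

Lemma Sm_delta i v : Sm (fun j : 'I_n => if j == i then v else 0) = v.
Proof. by rewrite /Sm Sl_delta ?enum_uniq // mem_enum. Qed.

Lemma Sm_two a b : Sm (fun j : 'I_n => (if j == i0 then a else 0) + (if j == i1 then b else 0)) = a + b.
Proof. by rewrite /Sm Sl_add -/(Sm _) -/(Sm _) !Sm_delta. Qed.

Lemma D2_e0 : D2 e0 Oz = 1.
Proof.
rewrite -(Sm_delta i0 1) /D2. apply: Sl_ext => j. rewrite /term /e0 /Oz /cn_zero.
case: (j == i0) => /=; ring.
Qed.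

Lemma H_O : H Oz e0 Oz = 0.
Proof.
rewrite /H D2_refl. have -> : Ip Oz Oz e0 Oz = 0.
  rewrite /Ip /Sm -(Sl_zero (enum 'I_n)). apply: Sl_ext => j; ring.
ring.
Qed.

Lemma H_sc t x : H Oz e0 (cn_rscale t x) = t ^ 2 * H Oz e0 x.
Proof.
rewrite /H.
have -> : D2 (cn_rscale t x) Oz = t^2 * D2 x Oz.
  rewrite /D2 /Sm -Sl_scal. apply: Sl_ext => j. rewrite /term /Oz /cn_zero /cn_rscale /Cmult /RtoC /=. ring.
have -> : Ip (cn_rscale t x) Oz e0 Oz = t * Ip x Oz e0 Oz.
  rewrite /Ip /Sm -Sl_scal. apply: Sl_ext => j. rewrite /Oz /cn_zero /cn_rscale /Cmult /RtoC /=. ring.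
ring.
Qed.

Lemma dist_sc t s x : cn_dist (cn_rscale t x) (cn_rscale s x) = Rabs (t - s) * cn_dist x Oz.
Proof.
rewrite !dist_D2.
have -> : D2 (cn_rscale t x) (cn_rscale s x) = (t - s)^2 * D2 x Oz.
  rewrite /D2 /Sm -Sl_scal. apply: Sl_ext => j. rewrite /term /Oz /cn_zero /cn_rscale /Cmult /RtoC /=. ring.
rewrite sqrt_mult; [|apply: pow2_ge_0|apply: D2_nonneg].
by rewrite -(Rsqr_pow2) sqrt_Rsqr_abs.
Qed.

Lemma sc0 x : cn_rscale 0 x = Oz.
Proof.
apply: functional_extensionality => j. rewrite /Oz /cn_zero /cn_rscale /Cmult /RtoC /=.
apply: injective_projections => /=; ring.
Qed.
Lemma sc1 x : cn_rscale 1 x = x.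
Proof.
apply: functional_extensionality => j. rewrite /cn_rscale /Cmult /RtoC /=.
apply: injective_projections => /=; ring.
Qed.

Lemma Dm_open : cn_open Dm.
Proof.
move=> x hx. have [d [hd Hd]] := ctn_H Oz e0 x (1 - H Oz e0 x) ltac:(rewrite /Dm in hx; lra).
exists d; split => // w hw. have := Hd w hw. rewrite /Dm. move/Rabs_def2. lra.
Qed.

Lemma Dm_O : Dm Oz.
Proof. rewrite /Dm H_O; lra. Qed.

Lemma Dm_star t x : 0 <= t <= 1 -> Dm x -> Dm (cn_rscale t x).
Proof.
move=> ht hx. rewrite /Dm H_sc. rewrite /Dm in hx.
have h1 : 0 <= t ^ 2 <= 1 by split; [apply: pow2_ge_0| nra].
case: (Rle_dec 0 (H Oz e0 x)) => hs; nra.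
Qed.

Lemma path_open (U : Cn n -> Prop) x : cn_open U ->
  forall t, 0 <= t <= 1 -> U (cn_rscale t x) ->
  exists d, 0 < d /\ forall s, 0 <= s <= 1 -> Rabs (s - t) < d -> U (cn_rscale s x).
Proof.
move=> hU t ht hUt. have [e [he He]] := hU _ hUt.
exists (e / (cn_dist x Oz + 1)). have hd := dist_nonneg x Oz.
split; first by apply: Rdiv_lt_0_compat; lra.
move=> s hs hst. apply: He. rewrite dist_sc.
have hst' : Rabs (t - s) < e / (cn_dist x Oz + 1) by rewrite Rabs_minus_sym.
have : Rabs (t - s) * (cn_dist x Oz + 1) < e.
  have := Rmult_lt_compat_r (cn_dist x Oz + 1) _ _ ltac:(lra) hst'.
  have -> : e / (cn_dist x Oz + 1) * (cn_dist x Oz + 1) = e by field; lra. done.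
have := Rabs_pos (t - s). nra.
Qed.

Lemma Dm_conn : cn_connected Dm.
Proof.
move=> U V hU hV hcov hdis [z1 [hz1 hUz1]] [z2 [hz2 hVz2]].
have hseg : forall x t, Dm x -> 0 <= t <= 1 -> Dm (cn_rscale t x) by move=> x t hx ht; exact: Dm_star.
case: (hcov Oz Dm_O) => hO.
- apply: (interval_conn (fun t => U (cn_rscale t z2)) (fun t => V (cn_rscale t z2))).
  + move=> t ht; exact: hcov (hseg _ _ hz2 ht).
  + move=> t ht; exact: hdis (hseg _ _ hz2 ht).
  + move=> t ht; exact: path_open.
  + move=> t ht; exact: path_open.
  + by rewrite sc0.
  + by rewrite sc1.
- apply: (interval_conn (fun t => V (cn_rscale t z1)) (fun t => U (cn_rscale t z1))).
  + move=> t ht. case: (hcov _ (hseg _ _ hz1 ht)); auto.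
  + move=> t ht h1 h2; exact: hdis (hseg _ _ hz1 ht) h2 h1.
  + move=> t ht; exact: path_open.
  + move=> t ht; exact: path_open.
  + by rewrite sc0.
  + by rewrite sc1.
Qed.

Definition zp (a : R) : Cn n := fun j => if j == i0 then RtoC a else if j == i1 then RtoC 1 else RtoC 0.

Lemma H_zp a : H Oz e0 (zp a) = 3 * (a^2 + 1) - 4 * a^2.
Proof.
rewrite /H.
have -> : D2 (zp a) Oz = a^2 + 1.
  rewrite -Sm_two /D2. apply: Sl_ext => j. rewrite /term /zp /Oz /cn_zero.
  case: (eqVneq j i0) => [->|hj0]; first by rewrite (negbTE hi) /=; ring.
  case: (j == i1) => /=; ring.
have -> : Ip (zp a) Oz e0 Oz = a.
  transitivity (Sm (fun j : 'I_n => if j == i0 then a else 0)); last exact: Sm_delta.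
  rewrite /Ip. apply: Sl_ext => j. rewrite /zp /e0 /Oz /cn_zero.
  case: (j == i0) => /=; first ring.
  case: (j == i1) => /=; ring.
done.
Qed.

Lemma Dm_nonconvex : ~ cn_convex Dm.
Proof.
move=> hc.
have h1 : Dm (zp 2) by rewrite /Dm H_zp; lra.
have h2 : Dm (zp (-2)) by rewrite /Dm H_zp; lra.
have := hc _ _ (/2) h1 h2 ltac:(lra).
have -> : cn_add (cn_rscale (1 - /2) (zp 2)) (cn_rscale (/2) (zp (-2))) = zp 0.
  apply: functional_extensionality => j. rewrite /cn_add /cn_rscale /zp /Cplus /Cmult /RtoC.
  case: (j == i0); case: (j == i1); apply: injective_projections => /=; field.
rewrite /Dm H_zp. lra.
Qed.
End Dom.
Lemma small_inv eps : 0 < eps -> exists N : nat, forall k : nat, (k >= N)%coq_nat -> / (INR k + 1) < eps.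
Proof.
move=> he. have [N hN] := INR_unbounded (/ eps).
exists N => k hk. have hkN : INR N <= INR k by apply: le_INR.
have hpos : 0 < / eps by apply: Rinv_0_lt_compat.
have hk1 : 0 < INR k + 1 by have := pos_INR k; lra.
rewrite -(Rinv_inv eps). apply: Rinv_lt_contravar; first by apply: Rmult_lt_0_compat.
lra.
Qed.

Section Closed.
Variable n : nat.
Implicit Types x y z w a b : Cn n.

Lemma coord_fst a b j : Rabs (fst (a j) - fst (b j)) <= cn_dist a b.
Proof.
rewrite dist_D2 -sqrt_Rsqr_abs. apply: sqrt_le_1_alt.
apply: (Rle_trans _ (term a b j)).
- rewrite /term /Rsqr. have := pow2_ge_0 (snd (a j) - snd (b j)). lra.
- apply: Sl_term_le; [exact: term_nonneg | exact: mem_enum].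
Qed.
Lemma coord_snd a b j : Rabs (snd (a j) - snd (b j)) <= cn_dist a b.
Proof.
rewrite dist_D2 -sqrt_Rsqr_abs. apply: sqrt_le_1_alt.
apply: (Rle_trans _ (term a b j)).
- rewrite /term /Rsqr. have := pow2_ge_0 (fst (a j) - fst (b j)). lra.
- apply: Sl_term_le; [exact: term_nonneg | exact: mem_enum].
Qed.

Lemma dist0_eq a b : cn_dist a b = 0 -> a = b.
Proof.
move=> h. have hD : D2 a b = 0 by rewrite D2_dist h; ring.
apply: functional_extensionality => j.
have ht := Sl_eq0 _ (enum 'I_n) (term a b) j (term_nonneg a b) (mem_enum _ j) hD.
rewrite /term in ht.
have h1 := pow2_ge_0 (fst (a j) - fst (b j)). have h2 := pow2_ge_0 (snd (a j) - snd (b j)).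
have e1 : (fst (a j) - fst (b j))^2 = 0 by lra.
have e2 : (snd (a j) - snd (b j))^2 = 0 by lra.
apply: injective_projections.
- apply: Rminus_diag_uniq. apply: Rsqr_0_uniq. by rewrite Rsqr_pow2.
- apply: Rminus_diag_uniq. apply: Rsqr_0_uniq. by rewrite Rsqr_pow2.
Qed.

Lemma Sl_small (l : seq 'I_n) (g : 'I_n -> nat -> R) :
  (forall j eps, 0 < eps -> exists N : nat, forall k, (k >= N)%coq_nat -> g j k < eps) ->
  forall eps, 0 < eps -> exists N : nat, forall k, (k >= N)%coq_nat -> Sl l (fun j => g j k) < eps.
Proof.
move=> hg. elim: l => [|a l IH] eps he.
- exists 0%nat => k _. rewrite /Sl /=. lra.
- have [N1 H1] := hg a (eps/2) ltac:(lra).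
  have [N2 H2] := IH (eps/2) ltac:(lra).
  exists (Nat.max N1 N2) => k hk. rewrite Sl_cons.
  have := H1 k ltac:(lia). have := H2 k ltac:(lia). lra.
Qed.

Lemma closed_image (A : Cn n -> Cn n) (K0 : Cn n -> Prop) :
  real_isometry A ->
  (forall x, (forall eps, 0 < eps -> exists w, K0 w /\ cn_dist x w < eps) -> K0 x) ->
  cn_closed (cn_image A K0).
Proof.
move=> hA hK0 y hy.
apply: NNPP => hne.
have hall : forall eps, 0 < eps -> exists x, K0 x /\ cn_dist y (A x) < eps.
  move=> eps he. apply: NNPP => hno. apply: hne. exists eps; split => // w hw [x [hx e]].
  subst w. apply: hno. by exists x.
pose xs := fun k : nat => proj1_sig (constructive_indefinite_description _ (hall (/ (INR k + 1)) ltac:(apply: Rinv_0_lt_compat; have := pos_INR k; lra))).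
have hxs : forall k, K0 (xs k) /\ cn_dist y (A (xs k)) < / (INR k + 1).
  move=> k. rewrite /xs. case: constructive_indefinite_description => x hx. exact: hx.
have hcauchy : forall eps, 0 < eps -> exists N : nat, forall k l, (k >= N)%coq_nat -> (l >= N)%coq_nat -> cn_dist (xs k) (xs l) < eps.
  move=> eps he. have [N hN] := small_inv (eps/2) ltac:(lra).
  exists N => k l hk hl. rewrite -hA.
  have := triangle (A (xs k)) y (A (xs l)). rewrite dist_sym.
  have := (hxs k).2. have := (hxs l).2. rewrite (dist_sym y (A (xs k))).
  have := hN k hk. have := hN l hl. lra.
have hC1 : forall j, Cauchy_crit (fun k => fst (xs k j)).
  move=> j eps he. have [N hN] := hcauchy eps he. exists N => k l hk hl.
  rewrite /Rdist. have := coord_fst (xs k) (xs l) j. have := hN k l hk hl. lra.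
have hC2 : forall j, Cauchy_crit (fun k => snd (xs k j)).
  move=> j eps he. have [N hN] := hcauchy eps he. exists N => k l hk hl.
  rewrite /Rdist. have := coord_snd (xs k) (xs l) j. have := hN k l hk hl. lra.
pose x : Cn n := fun j => (proj1_sig (Rcomplete.R_complete _ (hC1 j)), proj1_sig (Rcomplete.R_complete _ (hC2 j))).
have hcv1 : forall j, Un_cv (fun k => fst (xs k j)) (fst (x j)).
  move=> j. rewrite /x /=. case: Rcomplete.R_complete => l hl. exact: hl.
have hcv2 : forall j, Un_cv (fun k => snd (xs k j)) (snd (x j)).
  move=> j. rewrite /x /=. case: Rcomplete.R_complete => l hl. exact: hl.
have hconv : forall eps, 0 < eps -> exists N : nat, forall k, (k >= N)%coq_nat -> cn_dist x (xs k) < eps.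
  move=> eps he.
  have hg : forall j e, 0 < e -> exists N : nat, forall k, (k >= N)%coq_nat -> term x (xs k) j < e.
    move=> j e he'.
    have hs : 0 < sqrt (e/2) by apply: sqrt_lt_R0; lra.
    have [N1 H1] := hcv1 j _ hs. have [N2 H2] := hcv2 j _ hs.
    exists (Nat.max N1 N2) => k hk. rewrite /term.
    have h1 := H1 k ltac:(lia). have h2 := H2 k ltac:(lia). rewrite /Rdist in h1 h2.
    have hsq : sqrt (e/2) ^ 2 = e/2 by rewrite pow2_sqrt; lra.
    have a1 : (fst (x j) - fst (xs k j))^2 < e/2.
      rewrite -hsq -Rsqr_pow2 -Rsqr_pow2. apply: Rsqr_lt_abs_1. rewrite Rabs_minus_sym (Rabs_right (sqrt _)); lra.
    have a2 : (snd (x j) - snd (xs k j))^2 < e/2.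
      rewrite -hsq -Rsqr_pow2 -Rsqr_pow2. apply: Rsqr_lt_abs_1. rewrite Rabs_minus_sym (Rabs_right (sqrt _)); lra.
    lra.
  have hep : 0 < eps ^ 2 by apply: pow_lt; lra.
  have [N hN] := Sl_small (enum 'I_n) (fun j k => term x (xs k) j) hg (eps^2) hep.
  exists N => k hk. rewrite dist_D2. have h := hN k hk.
  rewrite -(sqrt_pow2 eps); last lra. apply: sqrt_lt_1_alt. split; [exact: D2_nonneg|exact: h].
have hKx : K0 x.
  apply: hK0 => eps he. have [N hN] := hconv eps he. exists (xs N); split; [exact: (hxs N).1| apply: hN; lia].
have hAx : A x = y.
  apply: dist0_eq. apply: Rle_antisym; last exact: dist_nonneg.
  apply: Rnot_lt_le => hpos.
  set d := cn_dist (A x) y in hpos.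
  have [N1 H1] := hconv (d/2) ltac:(lra).
  have [N2 H2] := small_inv (d/2) ltac:(lra).
  set k := Nat.max N1 N2.
  have := triangle (A x) (A (xs k)) y. rewrite hA.
  have := H1 k ltac:(lia). have := H2 k ltac:(lia). have := (hxs k).2. rewrite (dist_sym y). rewrite -/d. lra.
apply: hy. by exists x.
Qed.
End Closed.
Lemma closure_le (n : nat) (f : Cn n -> R) (K0 : Cn n -> Prop) x alpha :
  ctn f x -> (forall w, K0 w -> f w <= alpha) ->
  (forall eps, 0 < eps -> exists w, K0 w /\ cn_dist x w < eps) -> f x <= alpha.
Proof.
move=> hf hK hcl. apply: Rnot_lt_le => hlt.
have [d [hd Hd]] := hf (f x - alpha) ltac:(lra).
have [w [hw hxw]] := hcl d hd.
have := Hd w hxw. have := hK w hw. move=> h1 /Rabs_def2. lra.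
Qed.

Theorem proposition3p2 (n : nat) (hn : (2 <= n)%nat) :
  exists D : Cn n -> Prop,
    cn_domain D /\ ~ cn_convex D /\
    forall A : Cn n -> Cn n, real_isometry A -> pseudoconvex (cn_image A D).
Proof.
have h0 : (0 < n)%nat by apply: leq_trans hn.
have h1 : (1 < n)%nat by [].
pose i0 : 'I_n := Ordinal h0. pose i1 : 'I_n := Ordinal h1.
have hi : i0 != i1 by [].
exists (Dm n i0). split; last split.
- split; first by exists (Oz n); exact: (Dm_O n i0).
  split; [exact: (Dm_open n i0) | exact: (Dm_conn n i0)].
- exact: (Dm_nonconvex n i0 i1 hi).
move=> A hA.
set P' := A (Oz n). set Q' := A (e0 n i0).
have himH : forall y, cn_image A (Dm n i0) y -> H P' Q' y < 1.
  move=> y [x [hx ->]]. by rewrite /P' /Q' (iso_H A hA).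
have hQP : D2 Q' P' = 1 by rewrite /P' /Q' (iso_D2 A hA) (D2_e0 n i0).
exists (uf P' Q'). split; first split.
- move=> z hz eps he. have [d [hd Hd]] := ctn_uf P' Q' z (himH z hz) eps he.
  exists d; split => // w _ hw; exact: Hd w hw.
- move=> a b hdisc. apply: psh_ineq => //.
  + move=> t. apply: himH. apply: hdisc. rewrite /Cmod /=.
    have := sin2_cos2 t. rewrite /Rsqr => h.
    have -> : cos t ^ 2 + sin t ^ 2 = 1 by lra.
    rewrite sqrt_1. lra.
  + have hz : Cmod (RtoC 0) <= 1 by rewrite Cmod_0; lra.
    have := himH _ (hdisc (RtoC 0) hz).
    have -> : cn_add a (cn_cscale (RtoC 0) b) = a.
      apply: functional_extensionality => j. rewrite /cn_add /cn_cscale /Cplus /Cmult /RtoC /=.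
      apply: injective_projections => /=; ring.
    done.
- move=> c. set c' := Rmax c 1.
  have hc'1 : 1 <= c' by apply: Rmax_r.
  have hcc' : c <= c' by apply: Rmax_l.
  set K0 := fun x => H (Oz n) (e0 n i0) x <= 1 - / c' /\ cn_dist x (Oz n) <= c'.
  have hic : 0 < / c' by apply: Rinv_0_lt_compat; lra.
  exists (cn_image A K0). split; [|split; [|split]].
  + apply: closed_image => // x hcl. split.
    * apply: (@closure_le n _ K0 x _ (ctn_H (Oz n) (e0 n i0) x) _ hcl) => w [hw _]; exact: hw.
    * apply: (@closure_le n _ K0 x _ (ctn_dist (Oz n) x) _ hcl) => w [_ hw]; exact: hw.
  + exists (cn_dist (Oz n) (A (Oz n)) + c') => z [x [[_ hx] ->]].
    have := triangle (Oz n) (A (Oz n)) (A x). rewrite hA (dist_sym (Oz n) x). have e : @cn_zero n = Oz n by []. rewrite e. lra.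
  + move=> z [x [[hx _] ->]]. exists x; split => //. rewrite /Dm. lra.
  + move=> z [x [hx ->]] hu. exists x; split => //.
    rewrite /uf /P' /Q' (iso_H A hA) (iso_D2 A hA) in hu.
    rewrite /Dm in hx.
    have hpos : 0 < 1 - H (Oz n) (e0 n i0) x by lra.
    have hinv : 0 < / (1 - H (Oz n) (e0 n i0) x) by apply: Rinv_0_lt_compat.
    have hD := D2_nonneg x (Oz n).
    have hc0 : 0 < c by lra.
    split.
    * have h2 : / (1 - H (Oz n) (e0 n i0) x) < c by lra.
      have h3 : / c < 1 - H (Oz n) (e0 n i0) x.
        rewrite -(Rinv_inv (1 - _)). apply: Rinv_lt_contravar => //. by apply: Rmult_lt_0_compat.
      have h4 : / c' <= / c by apply: Rinv_le_contravar.
      lra.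
    * rewrite D2_dist in hD hu. have := dist_nonneg x (Oz n). nra.
Qed.
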